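(* Let $L\ge2$. Let $\mathcal{M}^*=(m_1^*,\dots,m_L^* )$ be a route with $m_1^*=1$ such that, for each $1\le k<L$, there is a unique nearest neighbor with respect to $(m_1^*,\dots,m_k^* )$ and $m_{k+1}^*$ is that nearest neighbor. Then every route $\mathcal{M}'=(1,m_2,\dots,m_L)$ of the same length $L$ satisfies $$R_{\mathrm{DF}}(\mathcal{M}^* )\ge R_{\mathrm{DF}}(\mathcal{M}').$$
   Context: Network: a finite set of nodes $\mathcal{S}=\{1,2,\dots,D\}$, $D\ge 2$. Node $1$ is the source and node $D$ is the destination. Received powers: for distinct nodes $i,t$, the power received at $t$ from $i$ is a positive real number $P_{it}$. All receivers have the same noise power $N>0$. Routes: a route is an ordered tuple of distinct nodes $\mathcal{M}=(m_1,\dots,m_L)$ with $m_1=1$ and $L\ge1$. DF with independent codewords: the reception rate of node $m_t$ ($2\le t\le L$) in route $\mathcal{M}$ is $$R_{m_t}(\mathcal{M})=\tfrac12\log\Big(1+N^{-1}\sum_{i=1}^{t-1}P_{m_i m_t}\Big).$$ The supported DF rate (for $L\ge2$) is $R_{\mathrm{DF}}(\mathcal{M})=\min_{2\le t\le L}R_{m_t}(\mathcal{M})$. Nearest neighbor: node $i\notin\mathcal{M}$ is a nearest neighbor with respect to route $\mathcal{M}$ iff $P_{mi}\ge P_{mj}$ for all $m\in\mathcal{M}$ and all $j\in\mathcal{S}\setminus(\mathcal{M}\cup\{i\})$. *)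

(* Defs.v *)
From Stdlib Require Import Reals List Arith.
Import ListNotations.
Open Scope R_scope.

(* Nodes are the natural numbers 1..D; node 1 is the source. *)
Definition in_S (D : nat) (i : nat) : Prop := (1 <= i <= D)%nat.

Definition is_route (D : nat) (M : list nat) : Prop :=
  hd_error M = Some 1%nat /\ NoDup M /\ Forall (in_S D) M.

(* Reception rate of the node at (0-based) position t of route M, i.e. of
   m_{t+1} in the paper's 1-based notation:
   1/2 log(1 + N^{-1} * sum_{i < t} P (m_i) (m_t)). *)
Definition rec_rate (P : nat -> nat -> R) (N : R) (M : list nat) (t : nat) : R :=
  / 2 * ln (1 + / N * fold_right Rplus 0
              (map (fun i => P (nth i M 0%nat) (nth t M 0%nat)) (seq 0 t))).

(* DF rate: minimum of reception rates over positions 1..L-1 (0-based),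
   i.e. over m_2..m_L.  Meaningful for length L >= 2. *)
Definition R_DF (P : nat -> nat -> R) (N : R) (M : list nat) : R :=
  fold_right Rmin (rec_rate P N M 1)
    (map (rec_rate P N M) (seq 1 (length M - 1))).

Definition nearest_neighbor (D : nat) (P : nat -> nat -> R) (M : list nat) (i : nat) : Prop :=
  in_S D i /\ ~ In i M /\
  forall m j, In m M -> in_S D j -> ~ In j M -> j <> i -> P m i >= P m j.

(* Main.v *)
Require Import Defs.
From Stdlib Require Import Reals List Arith Lia Lra.
Import ListNotations.
Open Scope R_scope.

Definition sumf (f : nat -> R) (l : list nat) : R := fold_right Rplus 0 (map f l).

Lemma sumf_app f l1 l2 : sumf f (l1 ++ l2) = sumf f l1 + sumf f l2.
Proof. induction l1; simpl; unfold sumf in *; simpl; try rewrite IHl1; lra. Qed.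

Lemma sumf_nonneg f l : (forall x, In x l -> 0 <= f x) -> 0 <= sumf f l.
Proof.
  induction l; intros H; unfold sumf in *; simpl; [lra|].
  assert (0 <= f a) by (apply H; simpl; auto).
  assert (0 <= fold_right Rplus 0 (map f l)) by (apply IHl; intros; apply H; simpl; auto).
  lra.
Qed.

Lemma sumf_le_pt f g l : (forall x, In x l -> f x <= g x) -> sumf f l <= sumf g l.
Proof.
  induction l; intros H; unfold sumf in *; simpl; [lra|].
  assert (f a <= g a) by (apply H; simpl; auto).
  assert (fold_right Rplus 0 (map f l) <= fold_right Rplus 0 (map g l))
    by (apply IHl; intros; apply H; simpl; auto).
  lra.
Qed.

Lemma sumf_sub f l1 : forall l2, NoDup l1 -> NoDup l2 -> incl l1 l2 ->
  (forall x, In x l2 -> 0 <= f x) -> sumf f l1 <= sumf f l2.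
Proof.
  induction l1 as [|a l1 IH]; intros l2 N1 N2 Hi Hp.
  - unfold sumf at 1; simpl. apply sumf_nonneg; auto.
  - assert (Ha : In a l2) by (apply Hi; simpl; auto).
    destruct (in_split a l2 Ha) as [l2a [l2b E]]. subst l2.
    inversion N1; subst.
    assert (IH' : sumf f l1 <= sumf f (l2a ++ l2b)).
    { apply IH; auto. eapply NoDup_remove_1; eauto.
      intros x Hx. assert (Hx2 := Hi x (or_intror Hx)).
      apply in_app_or in Hx2. apply in_or_app. destruct Hx2 as [|[|]]; auto.
      subst; contradiction.
      intros x Hx; apply Hp. apply in_app_or in Hx; apply in_or_app; simpl; tauto. }
    rewrite sumf_app in IH'. rewrite sumf_app. unfold sumf in *; simpl in *. lra.
Qed.

Lemma map_seq_nth (g : nat -> R) (M : list nat) : forall t, (t <= length M)%nat ->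
  map (fun i => g (nth i M 0%nat)) (seq 0 t) = map g (firstn t M).
Proof.
  induction M as [|a M IH]; intros t Ht.
  - simpl in Ht. assert (t = 0%nat) by lia. subst. reflexivity.
  - destruct t. reflexivity.
    simpl. f_equal. rewrite <- seq_shift, map_map. apply IH. simpl in Ht; lia.
Qed.

Lemma rec_rate_eq P N M t : (t <= length M)%nat ->
  rec_rate P N M t = / 2 * ln (1 + / N * sumf (fun s => P s (nth t M 0%nat)) (firstn t M)).
Proof.
  intros H. unfold rec_rate, sumf.
  rewrite (map_seq_nth (fun s => P s (nth t M 0%nat))); auto.
Qed.

Lemma fold_min_le a l x : In x l -> fold_right Rmin a l <= x.
Proof.
  induction l; simpl; intros H; [contradiction|].
  destruct H. subst. apply Rmin_l.
  eapply Rle_trans; [apply Rmin_r| auto].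
Qed.

Lemma fold_min_attained a l : fold_right Rmin a l = a \/ In (fold_right Rmin a l) l.
Proof.
  induction l as [|b l IHl]; simpl; auto.
  destruct (Rle_dec b (fold_right Rmin a l)).
  rewrite Rmin_left by auto. right; left; reflexivity.
  rewrite Rmin_right by lra.
  destruct IHl as [E|E]; [left; exact E|right; right; exact E].
Qed.

Lemma R_DF_le P N M t : (1 <= t < length M)%nat -> R_DF P N M <= rec_rate P N M t.
Proof.
  intros H. unfold R_DF. apply fold_min_le. apply in_map. apply in_seq. lia.
Qed.

Lemma R_DF_att P N M : (2 <= length M)%nat ->
  exists t, (1 <= t < length M)%nat /\ R_DF P N M = rec_rate P N M t.
Proof.
  intros H. unfold R_DF.
  destruct (fold_min_attained (rec_rate P N M 1) (map (rec_rate P N M) (seq 1 (length M - 1)))) as [E|E].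
  - exists 1%nat. split; [lia|auto].
  - apply in_map_iff in E. destruct E as [t [E1 E2]]. apply in_seq in E2.
    exists t. split; [lia|auto].
Qed.

Lemma in_firstn_nth (M : list nat) j x : In x (firstn j M) ->
  exists i, (i < j)%nat /\ (i < length M)%nat /\ nth i M 0%nat = x.
Proof.
  intros H. destruct (In_nth _ _ 0%nat H) as [i [Hi E]].
  rewrite length_firstn in Hi. rewrite nth_firstn in E.
  exists i. destruct (Nat.ltb_spec i j); [|lia]. repeat split; auto; lia.
Qed.

Lemma NoDup_firstn' (M : list nat) j : NoDup M -> NoDup (firstn j M).
Proof.
  intros H. rewrite <- (firstn_skipn j M) in H. eapply NoDup_app_remove_r; eauto.
Qed.

Lemma find_first (M S : list nat) (n : nat) :
  forall j, (j <= n)%nat ->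
  (forall i, (i < j)%nat -> In (nth i M 0%nat) S) \/
  (exists j', (j' < j)%nat /\ ~ In (nth j' M 0%nat) S /\
     forall i, (i < j')%nat -> In (nth i M 0%nat) S).
Proof.
  induction j; intros Hj.
  - left. intros; lia.
  - destruct (IHj ltac:(lia)) as [H|[j' [H1 [H2 H3]]]].
    + destruct (in_dec Nat.eq_dec (nth j M 0%nat) S) as [Hin|Hn].
      * left. intros i Hi. destruct (Nat.eq_dec i j); [subst; auto|apply H; lia].
      * right. exists j. auto.
    + right. exists j'. repeat split; auto.
Qed.

Theorem lemma3 (D : nat) (P : nat -> nat -> R) (N : R) (L : nat)
  (Mstar M' : list nat) :
  (2 <= D)%nat ->
  (forall i t, in_S D i -> in_S D t -> i <> t -> 0 < P i t) ->
  0 < N ->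
  (2 <= L)%nat ->
  is_route D Mstar -> length Mstar = L ->
  (forall k, (1 <= k < L)%nat ->
     nearest_neighbor D P (firstn k Mstar) (nth k Mstar 0%nat) /\
     (forall i, nearest_neighbor D P (firstn k Mstar) i -> i = nth k Mstar 0%nat)) ->
  is_route D M' -> length M' = L ->
  R_DF P N Mstar >= R_DF P N M'.
Proof.
  intros HD HP HN HL [Hs0 [Hsnd Hsin]] Hsl HNN [H'0 [H'nd H'in]] H'l.
  destruct (R_DF_att P N Mstar ltac:(lia)) as [t [Ht Et]]. rewrite Et.
  set (St := firstn t Mstar).
  destruct (find_first M' St (S t) (S t) (le_n _)) as [Hall|[j [Hj1 [Hj2 Hj3]]]].
  - exfalso.
    assert (Hinc : incl (firstn (S t) M') St).
    { intros x Hx. destruct (in_firstn_nth _ _ _ Hx) as [i [Hi1 [Hi2 <-]]]. auto. }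
    pose proof (NoDup_incl_length (NoDup_firstn' M' (S t) H'nd) Hinc) as Hlen.
    unfold St in Hlen. rewrite !length_firstn in Hlen. lia.
  - assert (Hj0 : j <> 0%nat).
    { intro; subst j. apply Hj2. destruct M'; simpl in *; try discriminate.
      destruct Mstar; simpl in *; try discriminate. inversion H'0; inversion Hs0; subst.
      unfold St. destruct t; [lia|]. simpl. auto. }
    apply Rle_ge. eapply Rle_trans; [apply (R_DF_le P N M' j); lia|].
    rewrite !rec_rate_eq by lia.
    set (y := nth j M' 0%nat). fold St.
    set (x := nth t Mstar 0%nat).
    assert (Hy : in_S D y).
    { rewrite Forall_forall in H'in. apply H'in. apply nth_In. lia. }
    assert (HSin : forall s, In s St -> in_S D s).
    { intros s Hs. rewrite Forall_forall in Hsin. apply Hsin.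
      unfold St in Hs. rewrite <- (firstn_skipn t Mstar). apply in_or_app; auto. }
    assert (Hpos : forall s, In s St -> 0 <= P s y).
    { intros s Hs. apply Rlt_le. apply HP; auto. intro; subst; contradiction. }
    assert (A1 : sumf (fun s => P s y) (firstn j M') <= sumf (fun s => P s y) St).
    { apply sumf_sub; auto. apply NoDup_firstn'; auto. apply NoDup_firstn'; auto.
      intros z Hz. destruct (in_firstn_nth _ _ _ Hz) as [i [Hi1 [Hi2 <-]]]. auto. }
    assert (A2 : sumf (fun s => P s y) St <= sumf (fun s => P s x) St).
    { apply sumf_le_pt. intros s Hs.
      destruct (Nat.eq_dec y x) as [E|E]; [rewrite E; lra|].
      destruct (HNN t ltac:(lia)) as [[_ [_ Hnn]] _].
      apply Rge_le. apply Hnn; auto. }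
    assert (A0 : 0 <= sumf (fun s => P s y) (firstn j M')).
    { apply sumf_nonneg. intros s Hs. destruct (in_firstn_nth _ _ _ Hs) as [i [Hi1 [Hi2 <-]]].
      apply Hpos. apply Hj3; auto. }
    assert (0 < / N) by (apply Rinv_0_lt_compat; auto).
    apply Rmult_le_compat_l; [lra|].
    set (a := 1 + / N * sumf (fun s => P s y) (firstn j M')).
    set (b := 1 + / N * sumf (fun s => P s x) St).
    assert (Hab : a <= b).
    { unfold a, b. apply Rplus_le_compat_l. apply Rmult_le_compat_l; lra. }
    assert (Ha : 0 < a) by (unfold a; apply Rplus_lt_le_0_compat; [lra| apply Rmult_le_pos; lra]).
    destruct (Rle_lt_or_eq_dec _ _ Hab) as [Hlt|Heq].
    + left. apply ln_increasing; auto.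
    + rewrite Heq. lra.
Qed.
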